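(* Suppose there exist $i, d \ge 2$ with $i \le d$ such that $o(\alpha_d) + a_i \ge c_R$ and $o(\alpha_d) < \infty$. Then $R = k[[\widetilde{x}_1, \ldots, \widetilde{x}_n]]$ where $\widetilde{x}_j = x_j$ for $j \ne d$ and $\widetilde{x}_d = t^{a_d}$, and $\widetilde{x}_1,\ldots,\widetilde{x}_n$ are again Herzog–Kunz generators of $R$.
   Context: Let $k$ be an algebraically closed field of characteristic $0$ and let $(R,\mathfrak m)$ be a complete local noetherian domain of dimension $1$ containing $k$ with $R/\mathfrak m = k$; its normalization is $\overline R = k[[t]]$, $R \subseteq k[[t]]$ finite birational. Let $v$ be the $t$-adic valuation; for $A \subseteq k((t))$ let $v(A) = \{v(f): f\in A\setminus\{0\}\}$. The conductor is $\mathfrak C_R = \{x\in\overline R : x\overline R\subseteq R\} = t^{c_R}\overline R$, $c_R$ the conductor degree. The Herzog–Kunz sequence of $R$ is $v(\mathfrak m)\setminus v(\mathfrak m^2)$ listed increasingly as $a_1<\cdots<a_n$; Herzog–Kunz generators are $x_i \in R$ with $v(x_i)=a_i$ (these satisfy $R = k[[x_1,\ldots,x_n]]$). Fix Herzog–Kunz generators $x_1, \ldots, x_n$ with $x_1 = t^{a_1}$ and, for $i \ge 2$, $x_i = \alpha_i t^{a_i}$ with $\alpha_i \in k[[t]]$ a unit of constant term $1$. Define $o(\alpha_i) = v(\alpha_i - 1)$ (so $o(\alpha_i) = \infty$ if $\alpha_i = 1$). *)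

(* Defs.v *)
(* Formal power series k[[t]] modelled as coefficient
   sequences nat -> k; subsets of k[[t]] as predicates (ps k -> Prop). *)
From HB Require Import structures.
From mathcomp Require Import all_boot all_order all_algebra.
Set Implicit Arguments. Unset Strict Implicit. Unset Printing Implicit Defensive.
Import Order.TTheory GRing.Theory Num.Theory.
Local Open Scope ring_scope.

Section PS.
Variable k : fieldType.

Definition ps := nat -> k.

Definition psC (c : k) : ps := fun n => if n == 0%N then c else 0.
Definition ps0 : ps := fun _ => 0.
Definition ps1 : ps := psC 1.
Definition psadd (f g : ps) : ps := fun n => f n + g n.
Definition psopp (f : ps) : ps := fun n => - f n.
Definition pssub (f g : ps) : ps := fun n => f n - g n.
Definition psmul (f g : ps) : ps :=
  fun n => \sum_(j < n.+1) f j * g (n - j)%N.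
Definition pst (m : nat) : ps := fun n => if n == m then 1 else 0.
Definition pspow (f : ps) (e : nat) : ps := iter e (psmul f) ps1.
Definition pssum (m : nat) (F : 'I_m -> ps) : ps :=
  fun n => \sum_(j < m) F j n.

Definition has_val (f : ps) (m : nat) : Prop :=
  f m != 0 /\ forall j, (j < m)%N -> f j = 0.

Definition vset (A : ps -> Prop) (m : nat) : Prop :=
  exists f, A f /\ has_val f m.

Definition is_k_subalgebra (R : ps -> Prop) : Prop :=
  (forall c, R (psC c)) /\
  (forall f g, R f -> R g -> R (psadd f g)) /\
  (forall f g, R f -> R g -> R (psmul f g)).

Definition ps_finite_over (R : ps -> Prop) : Prop :=
  exists (m : nat) (g : 'I_m -> ps), forall f : ps,
    exists r : 'I_m -> ps, (forall j, R (r j)) /\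
      f = pssum (fun j => psmul (r j) (g j)).

(* R -> k[[t]] is birational: every f in k[[t]] is a quotient a/b of
   elements of R (so Frac R = k((t))). *)
Definition ps_birational_over (R : ps -> Prop) : Prop :=
  forall f : ps, exists a b, R a /\ R b /\ b <> ps0 /\ psmul f b = a.

Definition in_conductor (R : ps -> Prop) (x : ps) : Prop :=
  forall f, R (psmul x f).
Definition is_conductor_degree (R : ps -> Prop) (c : nat) : Prop :=
  (forall x, in_conductor R x <-> exists f, x = psmul (pst c) f).

(* maximal ideal of the local ring R: its non-units *)
Definition maxid (R : ps -> Prop) (f : ps) : Prop :=
  R f /\ ~ (exists g, R g /\ psmul f g = ps1).

Definition maxid2 (R : ps -> Prop) (f : ps) : Prop :=
  exists (m : nat) (g h : 'I_m -> ps),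
    (forall j, maxid R (g j) /\ maxid R (h j)) /\
    f = pssum (fun j => psmul (g j) (h j)).

Definition is_HK_sequence (R : ps -> Prop) (n : nat) (a : nat -> nat) : Prop :=
  (forall j, (1 <= j)%N -> (j < n)%N -> (a j < a j.+1)%N) /\
  (forall m, (vset (maxid R) m /\ ~ vset (maxid2 R) m) <->
             exists j, [/\ (1 <= j)%N, (j <= n)%N & a j = m]).

Definition is_HK_generators (R : ps -> Prop) (n : nat) (a : nat -> nat)
  (x : nat -> ps) : Prop :=
  forall j, (1 <= j)%N -> (j <= n)%N -> R (x j) /\ has_val (x j) (a j).

(* Substitution of y_1..y_n (all of positive valuation) into a power series
   F in n variables (F given by its coefficients on multi-indices). The
   coefficient of t^N only involves monomials of total degree <= N. *)
Definition ps_subst (n : nat) (F : {ffun 'I_n -> nat} -> k) (y : nat -> ps) : ps :=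
  fun N => \sum_(m : {ffun 'I_n -> 'I_N.+1} | (\sum_(j < n) (m j : nat) <= N)%N)
     F [ffun j => (m j : nat)] *
     (\big[psmul/ps1]_(j < n) pspow (y j.+1) (m j)) N.

(* k[[y_1,...,y_n]] ⊆ k[[t]] : image of the substitution map *)
Definition ps_gen (n : nat) (y : nat -> ps) (f : ps) : Prop :=
  exists F : {ffun 'I_n -> nat} -> k, f = ps_subst F y.

End PS.

(* Main.v *)
Require Import Defs.
From HB Require Import structures.
From mathcomp Require Import all_boot all_order all_algebra.
From mathcomp Require Import boolp zify ring.
From mathcomp Require Import mpoly.
Import Order.TTheory GRing.Theory Num.Theory.
Set Implicit Arguments. Unset Strict Implicit. Unset Printing Implicit Defensive.
Local Open Scope ring_scope.

Section PSRing.
Variable k : fieldType.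
Local Notation ps := (ps k).

HB.instance Definition _ := Choice.copy ps (nat -> k).

Lemma psaddA : associative (@psadd k).
Proof. by move=> f g h; apply/funext=> N; rewrite /psadd addrA. Qed.
Lemma psaddC : commutative (@psadd k).
Proof. by move=> f g; apply/funext=> N; rewrite /psadd addrC. Qed.
Lemma psadd0 : left_id (@ps0 k) (@psadd k).
Proof. by move=> f; apply/funext=> N; rewrite /psadd /ps0 add0r. Qed.
Lemma psaddN : left_inverse (@ps0 k) (@psopp k) (@psadd k).
Proof. by move=> f; apply/funext=> N; rewrite /psadd /ps0 /psopp addNr. Qed.

HB.instance Definition _ := GRing.isZmodule.Build ps psaddA psaddC psadd0 psaddN.

Definition tp (N : nat) (f : ps) : {poly k} := \poly_(i < N.+1) f i.

Lemma psmul_polyi f g N i : (i <= N)%N ->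
  psmul f g i = (tp N f * tp N g)`_i.
Proof.
move=> iN; rewrite coefM /psmul; apply: eq_bigr => j _.
rewrite /tp !coef_poly.
have jN : (j < N.+1)%N by apply: (leq_trans (ltn_ord j)); rewrite ltnS.
have jN' : (i - j < N.+1)%N by rewrite ltnS (leq_trans (leq_subr _ _)).
by rewrite jN jN'.
Qed.

Lemma tp_mul f g N : tp N (psmul f g) = \poly_(i < N.+1) (tp N f * tp N g)`_i.
Proof.
apply/polyP=> i; rewrite /tp !coef_poly; case: ifP => // iN.
by apply: psmul_polyi; rewrite -ltnS.
Qed.

Lemma coefM_congr (A P Q : {poly k}) N :
  (forall i, (i <= N)%N -> P`_i = Q`_i) -> (A * P)`_N = (A * Q)`_N.
Proof.
move=> H; rewrite !coefM; apply: eq_bigr => j _; congr (_ * _).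
by apply: H; rewrite leq_subr.
Qed.

Lemma tp_mulE f g N i : (i <= N)%N ->
  (tp N (psmul f g))`_i = (tp N f * tp N g)`_i.
Proof. by move=> iN; rewrite {1}/tp coef_poly ltnS iN (psmul_polyi _ _ iN). Qed.

Lemma psmulC : commutative (@psmul k).
Proof.
move=> f g; apply/funext=> N.
by rewrite (psmul_polyi _ _ (leqnn N)) (psmul_polyi _ _ (leqnn N)) mulrC.
Qed.

Lemma psmulA : associative (@psmul k).
Proof.
move=> f g h; apply/funext=> N.
rewrite (psmul_polyi _ _ (leqnn N)) (psmul_polyi _ _ (leqnn N)).
rewrite (coefM_congr _ (tp_mulE g h (N:=N))).
rewrite [(tp N (psmul f g) * _)]mulrC (coefM_congr _ (tp_mulE f g (N:=N))).
by rewrite mulrA [tp N h * _]mulrC.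
Qed.

Lemma psmul1 : left_id (@ps1 k) (@psmul k).
Proof.
move=> f; apply/funext=> N; rewrite /psmul big_ord_recl /= /ps1 /psC /= mul1r subn0.
rewrite big1 ?addr0 // => j _; by rewrite mul0r.
Qed.

Lemma psmulDl : left_distributive (@psmul k) (@psadd k).
Proof.
move=> f g h; apply/funext=> N; rewrite /psmul /psadd -big_split /=.
by apply: eq_bigr => j _; rewrite mulrDl.
Qed.

Lemma ps1_neq0 : (@ps1 k) != ps0 k.
Proof.
apply/eqP => H; have := congr1 (fun f => f 0%N) H.
by rewrite /ps1 /psC /ps0 /=; apply/eqP; rewrite oner_eq0.
Qed.

HB.instance Definition _ := GRing.Zmodule_isComNzRing.Build ps
  psmulA psmulC psmul1 psmulDl ps1_neq0.

Lemma psmulE (f g : ps) : psmul f g = f * g. Proof. by []. Qed.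
Lemma psaddE (f g : ps) : psadd f g = f + g. Proof. by []. Qed.
Lemma ps0E : ps0 k = 0. Proof. by []. Qed.
Lemma ps1E : ps1 k = 1. Proof. by []. Qed.
Lemma psoppE (f : ps) : psopp f = - f. Proof. by []. Qed.
Lemma pssubE (f g : ps) : pssub f g = f - g. Proof. by []. Qed.
Lemma pspowE (f : ps) e : pspow f e = f ^+ e.
Proof. by elim: e => [|e IH] //=; rewrite /pspow /= -/(pspow f e) IH exprS. Qed.
Lemma addE (f g : ps) N : (f + g) N = f N + g N. Proof. by []. Qed.
Lemma oppE (f : ps) N : (- f) N = - f N. Proof. by []. Qed.
Lemma subE (f g : ps) N : (f - g) N = f N - g N. Proof. by []. Qed.
Lemma zeroE N : (0 : ps) N = 0. Proof. by []. Qed.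
Lemma mulE (f g : ps) N : (f * g) N = \sum_(j < N.+1) f j * g (N - j)%N.
Proof. by []. Qed.
Lemma sumE I (r : seq I) P (F : I -> ps) N :
  (\sum_(i <- r | P i) F i) N = \sum_(i <- r | P i) F i N.
Proof.
elim: r => [|x r IH]; first by rewrite !big_nil.
by rewrite !big_cons; case: (P x); rewrite ?addE IH.
Qed.
Lemma oneE N : (1 : ps) N = (N == 0%N)%:R.
Proof. by rewrite -ps1E /ps1 /psC; case: (N == 0%N). Qed.
End PSRing.

Section Val.
Variable k : fieldType.
Local Notation ps := (ps k).
Implicit Types f g h u : ps.

Definition vge f s := forall j, (j < s)%N -> f j = 0.

Lemma vge_mul f g p q : vge f p -> vge g q -> vge (f * g) (p + q).
Proof.
move=> hf hg N hN; rewrite mulE big1 // => j _.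
case: (ltnP j p) => hj; first by rewrite hf ?mul0r.
rewrite hg ?mulr0 //; move: hj hN (ltn_ord j); move: (nat_of_ord j) => jj; lia.
Qed.


Lemma mul_at f g p q : vge f p -> vge g q -> (f * g) (p + q)%N = f p * g q.
Proof.
move=> hf hg; have hp : (p < (p + q).+1)%N by rewrite ltnS leq_addr.
rewrite mulE (bigD1 (Ordinal hp)) //= addKn big1 ?addr0 // => j /eqP hj.
case: (ltngtP j p) => h.
- by rewrite hf ?mul0r.
- rewrite hg ?mulr0 //; move: h (ltn_ord j); move: (nat_of_ord j) => jj; lia.
- by exfalso; apply: hj; apply: val_inj.
Qed.

Lemma vge_add f g s : vge f s -> vge g s -> vge (f + g) s.
Proof. by move=> hf hg j hj; rewrite addE hf ?hg ?addr0. Qed.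
Lemma vge_opp f s : vge f s -> vge (- f) s.
Proof. by move=> hf j hj; rewrite oppE hf ?oppr0. Qed.
Lemma vge_sub f g s : vge f s -> vge g s -> vge (f - g) s.
Proof. by move=> hf hg; apply: vge_add => //; apply: vge_opp. Qed.
Lemma vge_le f s s' : (s' <= s)%N -> vge f s -> vge f s'.
Proof. by move=> hs hf j hj; apply: hf; apply: leq_trans hs. Qed.
Lemma vge0 f : vge f 0. Proof. by []. Qed.
Lemma vge_zero s : vge (0 : ps) s. Proof. by []. Qed.
Lemma vge_expr f e : vge f 1 -> vge (f ^+ e) e.
Proof.
move=> hf; elim: e => [|e IH]; first exact: vge0.
by rewrite exprS -add1n; apply: vge_mul.
Qed.
Lemma vge_prod m (F : 'I_m -> ps) (s : 'I_m -> nat) :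
  (forall i, vge (F i) (s i)) -> vge (\prod_i F i) (\sum_i s i).
Proof.
move=> hF; apply: (big_ind2 (fun (b : ps) (a : nat) => vge b a)) => //.
by move=> x1 x2 y1 y2; apply: vge_mul.
Qed.

Lemma psC_mulE c f N : (psC c * f) N = c * f N.
Proof.
rewrite mulE big_ord_recl /= subn0 big1 ?addr0 // => j _.
by rewrite /psC /= mul0r.
Qed.
Lemma psC0 : psC 0 = (0 : ps).
Proof. by apply/funext => N; rewrite /psC; case: ifP. Qed.
Lemma psC_vge1 f : vge (f - psC (f 0%N)) 1.
Proof. by case=> // _; rewrite subE /psC /= subrr. Qed.

Lemma pst_mulE m g N : (pst k m * g) N = if (m <= N)%N then g (N - m)%N else 0.
Proof.
rewrite mulE; case: ifP => hm.
  have hp : (m < N.+1)%N by rewrite ltnS.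
  rewrite (bigD1 (Ordinal hp)) //= /pst eqxx mul1r big1 ?addr0 // => j /eqP hj.
  case: eqP => h; last by rewrite mul0r.
  by exfalso; apply: hj; apply: val_inj.
rewrite big1 // => j _; rewrite /pst; case: eqP => h; last by rewrite mul0r.
by move: (ltn_ord j) hm; rewrite h ltnS => ->.
Qed.

Lemma vge_shift f s : vge f s -> f = pst k s * (fun N => f (N + s)%N).
Proof.
move=> hf; apply/funext => N; rewrite pst_mulE; case: ifP => h.
  by rewrite subnK.
by apply: hf; rewrite ltnNge h.
Qed.

Lemma vge_pst m : vge (pst k m) m.
Proof. by move=> j hj; rewrite /pst; case: eqP => // h; move: hj; rewrite h ltnn. Qed.
Lemma has_val_pst m : has_val (pst k m) m.
Proof. by split; [rewrite /pst eqxx oner_eq0 | exact: vge_pst]. Qed.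

Lemma pst_add a b : pst k a * pst k b = pst k (a + b).
Proof.
apply/funext => N; rewrite pst_mulE /pst; case: ifP => h.
  by case: eqP => h1; case: eqP => h2 //; exfalso; lia.
by case: eqP => h2 //; exfalso; lia.
Qed.
Lemma pst0 : pst k 0 = 1.
Proof. by apply/funext => N; rewrite oneE /pst; case: (N == 0%N). Qed.
Lemma pst_expr a K : pst k a ^+ K = pst k (a * K).
Proof.
elim: K => [|K IH]; first by rewrite expr0 muln0 pst0.
by rewrite exprS IH pst_add mulnS.
Qed.

Lemma trunc_mul f f' g g' N :
  (forall i, (i <= N)%N -> f i = f' i) -> (forall i, (i <= N)%N -> g i = g' i) ->
  (f * g) N = (f' * g') N.
Proof.
move=> hf hg; rewrite !mulE; apply: eq_bigr => j _.
by rewrite hf ?hg // ?leq_subr // -ltnS.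
Qed.
End Val.

Section RS.
Variable k : fieldType.
Local Notation ps := (ps k).
Variable R : ps -> Prop.
Hypothesis hsub : is_k_subalgebra R.
Variable c : nat.
Hypothesis hc : is_conductor_degree R c.
Implicit Types f g h u : ps.

Lemma R_C a : R (psC a). Proof. by case: hsub. Qed.
Lemma R_add f g : R f -> R g -> R (f + g). Proof. by case: hsub => _ [] H _ Rf Rg; exact: (H f g Rf Rg). Qed.
Lemma R_mul f g : R f -> R g -> R (f * g). Proof. by case: hsub => _ [] _ H Rf Rg; exact: (H f g Rf Rg). Qed.
Lemma R0 : R 0. Proof. by rewrite -psC0; apply: R_C. Qed.
Lemma R1 : R 1. Proof. exact: (R_C 1). Qed.
Lemma R_opp f : R f -> R (- f).
Proof.
move=> Rf; have -> : - f = psC (-1) * f.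
  by apply/funext => N; rewrite psC_mulE mulN1r.
by apply: R_mul => //; apply: R_C.
Qed.
Lemma R_sub f g : R f -> R g -> R (f - g).
Proof. by move=> ? ?; apply: R_add => //; apply: R_opp. Qed.
Lemma R_sum (I : Type) (r : seq I) (P : pred I) (F : I -> ps) :
  (forall i, P i -> R (F i)) -> R (\sum_(i <- r | P i) F i).
Proof. by move=> H; apply: big_ind => //; [exact: R0 | exact: R_add]. Qed.
Lemma R_prod (I : Type) (r : seq I) (P : pred I) (F : I -> ps) :
  (forall i, P i -> R (F i)) -> R (\prod_(i <- r | P i) F i).
Proof. by move=> H; apply: big_ind => //; [exact: R1 | exact: R_mul]. Qed.
Lemma R_expr f e : R f -> R (f ^+ e).
Proof. by move=> Rf; elim: e => [|e IH]; [exact: R1 | rewrite exprS; apply: R_mul]. Qed.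
Lemma R_scal a f : R f -> R (psC a * f).
Proof. by move=> Rf; apply: R_mul => //; apply: R_C. Qed.

Lemma R_vge f : vge f c -> R f.
Proof.
move=> hf; have : in_conductor R f.
  by apply/hc; exists (fun N => f (N + c)%N); exact: vge_shift.
by move/(_ 1); rewrite psmulE mulr1.
Qed.

Lemma R_inv g : R g -> g 0%N != 0 -> exists h, R h /\ g * h = 1.
Proof.
move=> Rg g0; set a := (g 0%N)^-1.
set u := 1 - psC a * g.
have u0 : vge u 1 by case=> // _; rewrite /u subE oneE psC_mulE /= mulVf // subrr.
have Ru : R u by apply: R_sub; [exact: R1 | apply: R_scal].
pose S M := \sum_(i < M) u ^+ i.
have SS : forall M i, (i < M)%N -> S M i = S i.+1 i.
  move=> M i; elim: M => // M IH; rewrite ltnS leq_eqVlt => /orP [/eqP -> // | h].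
  by rewrite /S big_ord_recr /= addE (vge_expr u0) // addr0; exact: IH.
pose w : ps := fun N => S N.+1 N.
have Rw : R w.
  have -> : w = S c + (w - S c) by rewrite addrC subrK.
  apply: R_add; first by apply: R_sum => i _; apply: R_expr.
  by apply: R_vge => j hj; rewrite subE /w (SS c j hj) subrr.
exists (psC a * w); split; first exact: R_scal.
rewrite mulrA [g * _]mulrC.
have -> : psC a * g = 1 - u by rewrite /u; ring.
apply/funext => N.
rewrite (@trunc_mul k (1 - u) (1 - u) w (S N.+1) N) //; last first.
  by move=> i hi; rewrite /w (SS N.+1 i).
have -> : (1 - u) * S N.+1 = 1 - u ^+ N.+1.
  by rewrite /S -opprB mulNr -subrX1 opprB.
by rewrite subE (vge_expr u0) ?subr0.
Qed.

Lemma maxid0 g : maxid R g -> g 0%N = 0.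
Proof.
move=> [Rg nu]; case: (eqVneq (g 0%N) 0) => // h; exfalso; apply: nu.
by have [h' [Rh e]] := R_inv Rg h; exists h'; rewrite psmulE e.
Qed.

End RS.

Section Eval.
Variable k : fieldType.
Local Notation ps := (ps k).

Lemma psC_zmod : zmod_morphism (@psC k).
Proof. by move=> x y; apply/funext => N; rewrite subE /psC; case: ifP; rewrite ?subr0. Qed.
HB.instance Definition _ := GRing.isZmodMorphism.Build k ps (@psC k) psC_zmod.
Lemma psC_mult : multiplicative (@psC k).
Proof.
split; last by [].
move=> x y; apply/funext => N; rewrite psC_mulE /psC; case: ifP => _; by rewrite ?mulr0.
Qed.
HB.instance Definition _ := GRing.isMultiplicative.Build k ps (@psC k) psC_mult.

Variable n : nat.
Variable v : 'I_n -> ps.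
Hypothesis hv : forall i, vge (v i) 1.

Definition ev (Q : {mpoly k[n]}) : ps := mmap (@psC k) v Q.
Definition Mono (m : 'X_{1..n}) : ps := \prod_(i < n) v i ^+ m i.
Definition mn N (e : {ffun 'I_n -> 'I_N}) : 'X_{1..n} := [multinom (e i : nat) | i < n].
Definition SN N (H : 'X_{1..n} -> k) : k :=
  \sum_(e : {ffun 'I_n -> 'I_N.+1} | (\sum_(j < n) (e j : nat) <= N)%N)
     H (mn e) * Mono (mn e) N.

Lemma evM p q : ev (p * q) = ev p * ev q.
Proof. exact: (rmorphM (mmap (@psC k) v)). Qed.

Lemma evD p q : ev (p + q) = ev p + ev q.
Proof. exact: (rmorphD (mmap (@psC k) v)). Qed.
Lemma evX i : ev 'X_i = v i.
Proof. by rewrite /ev mmapX mmap1U. Qed.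
Lemma evXn i K : ev ('X_i ^+ K) = v i ^+ K.
Proof. by rewrite -evX; exact: (rmorphXn (mmap (@psC k) v)). Qed.

Lemma vge_Mono m : vge (Mono m) (mdeg m).
Proof. by rewrite mdegE; apply: vge_prod => i; apply: vge_expr. Qed.

Lemma mdeg_mn N (e : {ffun 'I_n -> 'I_N}) : mdeg (mn e) = (\sum_(j < n) (e j : nat))%N.
Proof. by rewrite mdegE; apply: eq_bigr => i _; rewrite mnmE. Qed.

Lemma SN_X N m : SN N (fun m' => ('X_[m] : {mpoly k[n]})@_m') = Mono m N.
Proof.
rewrite /SN; case: (leqP (mdeg m) N) => hm.
  pose em : {ffun 'I_n -> 'I_N.+1} := [ffun i => inord (m i)].
  have him : forall i, (m i <= N)%N.
    move=> i; apply: leq_trans hm; rewrite mdegE (bigD1 i) //= leq_addr //.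
  have mem : mn em = m by apply/mnmP => i; rewrite mnmE ffunE inordK // ltnS.
  have dem : (\sum_(j < n) (em j : nat) <= N)%N by rewrite -mdeg_mn mem.
  rewrite (bigD1 em) //= mcoeffX mem eqxx mul1r big1 ?addr0 // => e /andP [_ ne].
  rewrite mcoeffX; case: eqP => h; last by rewrite mul0r.
  exfalso; move/eqP: ne; apply; apply/ffunP => i; apply: val_inj.
  by rewrite ffunE /= h mnmE inordK // ltnS.
rewrite big1; first by rewrite vge_Mono.
move=> e he; rewrite mcoeffX; case: eqP => h; last by rewrite mul0r.
by move: he; rewrite -mdeg_mn -h leqNgt hm.
Qed.

Lemma evE Q N : ev Q N = SN N (fun m => Q@_m).
Proof.
elim/mpolyind: Q => [|a m p _ _ IH].
  rewrite /ev mmap0 zeroE /SN big1 // => e _; by rewrite mcoeff0 mul0r.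
rewrite /ev mmapD mmapZ mmapX addE -/(ev p) IH psC_mulE.
rewrite -[mmap1 v m N]/(Mono m N) -(SN_X N m) /SN big_distrr -big_split /=; apply: eq_bigr => e _.
by rewrite mcoeffD mcoeffZ mulrDl mulrA.
Qed.
End Eval.

Section Approx.
Variable k : fieldType.
Local Notation ps := (ps k).
Variable R : ps -> Prop.
Hypothesis hsub : is_k_subalgebra R.
Variable c : nat.
Hypothesis hc : is_conductor_degree R c.
Variable n : nat.
Variable a : nat -> nat.
Hypothesis ha : is_HK_sequence R n a.
Variable xt : nat -> ps.
Hypothesis hxt : is_HK_generators R n a xt.
Local Notation v := (fun i : 'I_n => xt i.+1).
Implicit Types f g h : ps.

Lemma vge_succ f s : vge f s -> f s = 0 -> vge f s.+1.
Proof. by move=> hf fs j; rewrite ltnS leq_eqVlt => /orP [/eqP -> // | /hf]. Qed.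
Lemma vge_scal x f s : vge f s -> vge (psC x * f) s.
Proof. by move=> hf j hj; rewrite psC_mulE hf ?mulr0. Qed.

Lemma a_pos j : (1 <= j)%N -> (j <= n)%N -> (0 < a j)%N.
Proof.
move=> h1 h2; have [_ /(_ (a j)) [_ H]] := ha.
have : exists j0, [/\ (1 <= j0)%N, (j0 <= n)%N & a j0 = a j] by exists j; split.
move/H => [[f [mf [hf0 _]]] _].
rewrite lt0n; apply/eqP => aj; move: hf0; rewrite aj (maxid0 hsub hc mf).
by rewrite eqxx.
Qed.

Lemma hv i : vge (v i) 1.
Proof.
have h1 : (1 <= i.+1)%N by [].
have h2 : (i.+1 <= n)%N by apply: ltn_ord.
have [_ [_ hz]] := hxt h1 h2.
by move=> j; rewrite ltnS leqn0 => /eqP ->; apply: hz; apply: a_pos.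
Qed.

Lemma Rv i : R (v i).
Proof. by have [] := hxt (isT : (1 <= i.+1)%N) (ltn_ord i). Qed.

Lemma R_ev Q : R (ev v Q).
Proof.
rewrite /ev /mmap; apply: (R_sum hsub) => // m _; apply: (R_mul hsub); first exact: (R_C hsub).
by apply: (R_prod hsub) => // i _; apply: (R_expr hsub) => //; apply: Rv.
Qed.

Lemma ev0 Q : vge (ev v Q) 1 -> True. Proof. by []. Qed.

Lemma approx s : forall f, R f -> exists Q, vge (f - ev v Q) s.
Proof.
elim: s => [|s IH] f Rf; first by exists 0.
have [Q hQ] := IH f Rf.
set e := f - ev v Q.
have Re : R e by apply: (R_sub hsub) => //; apply: R_ev.
case: (eqVneq (e s) 0) => es; first by exists Q; apply: vge_succ.
case: (eqVneq s 0%N) => [s0 | sn0].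
  subst s; exists (Q + (e 0%N)%:MP); rewrite /ev mmapD mmapC -/(ev v Q) opprD addrA.
  exact: psC_vge1.
have spos : (0 < s)%N by rewrite lt0n.
have me : maxid R e.
  split => // -[g [_ /(congr1 (fun f => f 0%N))]].
  rewrite psmulE mulE big_ord1 /= /e hQ // mul0r /ps1 /psC /=.
  by move/eqP; rewrite eq_sym oner_eq0.
have vme : vset (maxid R) s by exists e.
case: (pselect (vset (maxid2 R) s)) => hm2; last first.
  have [_ /(_ s) [H _]] := ha.
  have [j [j1 jn ajs]] := H (conj vme hm2).
  have [_ [xj0 xjz]] := hxt j1 jn.
  rewrite ajs in xj0 xjz.
  have ji : (j.-1 < n)%N by rewrite prednK // (leq_trans _ jn).
  pose i : 'I_n := Ordinal ji.
  have vi : v i = xt j by rewrite /= prednK.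
  exists (Q + (e s / xt j s) *: 'X_i).
  rewrite /ev mmapD mmapZ mmapX mmap1U -/(ev v Q) vi opprD addrA -/e.
  apply: vge_succ; first by apply: vge_sub => //; apply: vge_scal; apply: xjz.
  by rewrite subE psC_mulE divfK // subrr.
have [h [[m [g [g' [hgg hdef]]]] [hs0 hsz]]] := hm2.
have Rg : forall l, R (g l) by move=> l; case: (hgg l) => [[]].
have Rg' : forall l, R (g' l) by move=> l; case: (hgg l) => _ [].
have g'0 : forall l, vge (g' l) 1.
  move=> l j; rewrite ltnS leqn0 => /eqP ->; exact: (maxid0 hsub hc (hgg l).2).
have g0 : forall l, g l 0%N = 0 by move=> l; exact: (maxid0 hsub hc (hgg l).1).
have [G hG] := choice (fun l => IH (g l) (Rg l)).
have [H hH] := choice (fun l => IH (g' l) (Rg' l)).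
pose QQ := \sum_l G l * H l.
have hdef' : h = \sum_l g l * g' l.
  by rewrite hdef; apply/funext => N; rewrite sumE.
have hQQ : vge (h - ev v QQ) s.+1.
  have -> : ev v QQ = \sum_l ev v (G l * H l) by rewrite /ev /QQ (raddf_sum (mmap (@psC k) v)).
  rewrite hdef' -sumrB.
  apply: (big_ind (fun x => vge x s.+1)) => //; first by move=> x y; apply: vge_add.
  move=> l _; rewrite evM.
  have -> : g l * g' l - ev v (G l) * ev v (H l)
      = (g l - ev v (G l)) * g' l + ev v (G l) * (g' l - ev v (H l)) by ring.
  apply: vge_add; first by rewrite -addn1; apply: vge_mul => //; apply: hG.
  rewrite -add1n; apply: vge_mul; last exact: hH.
  move=> j; rewrite ltnS leqn0 => /eqP ->.
  by have := hG l 0%N spos; rewrite subE g0 sub0r => /eqP; rewrite oppr_eq0 => /eqP.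
exists (Q + (e s / h s) *: QQ).
rewrite /ev mmapD mmapZ -/(ev v Q) -/(ev v QQ) opprD addrA -/e.
set lam := e s / h s.
have -> : e - psC lam * ev v QQ = (e - psC lam * h) + psC lam * (h - ev v QQ) by ring.
apply: vge_add; last exact: vge_scal.
apply: vge_succ; first by apply: vge_sub => //; apply: vge_scal.
by rewrite subE psC_mulE /lam divfK // subrr.
Qed.

Lemma coefXK (i : 'I_n) K (p : {mpoly k[n]}) (m : 'X_{1..n}) : (m i < K)%N -> ('X_i ^+ K * p)@_m = 0.
Proof.
move=> h; rewrite mulrC mpolyXn; apply: memN_msupp_eq0.
rewrite (perm_mem (msuppMX _ _)); apply/negP => /mapP [m' _ hm].
by move: h; rewrite hm mnmDE mulmnE mnm1E eqxx mul1n ltnNge leq_addr.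
Qed.

Lemma subst_SN F N : ps_subst F xt N = SN v N (fun m => F [ffun j => m j]).
Proof.
rewrite /ps_subst /SN; apply: eq_bigr => e _; congr (_ * _).
  by congr F; apply/ffunP => j; rewrite !ffunE mnmE.
apply: (congr1 (fun f : ps => f N)); apply: eq_bigr => j _.
by rewrite pspowE mnmE.
Qed.

Lemma gen_R f : ps_gen n xt f -> R f.
Proof.
move=> [F ->].
pose Q : {mpoly k[n]} := \sum_(e : {ffun 'I_n -> 'I_c}) F [ffun j => (e j : nat)] *: 'X_[mn e].
have hQ : forall m, (mdeg m < c)%N -> Q@_m = F [ffun j => m j].
  move=> m hm.
  have him : forall i, (m i < c)%N.
    move=> i; apply: leq_ltn_trans hm; rewrite mdegE (bigD1 i) //= leq_addr //.
  pose em : {ffun 'I_n -> 'I_c} := [ffun i => Ordinal (him i)].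
  have mem : mn em = m by apply/mnmP => i; rewrite mnmE ffunE.
  rewrite /Q (raddf_sum (mcoeff m)) (bigD1 em) //= big1.
    rewrite addr0 mcoeffZ mcoeffX mem eqxx mulr1; congr F.
    by apply/ffunP => j; rewrite !ffunE.
  move=> e ne; rewrite mcoeffZ mcoeffX; case: eqP => h; last by rewrite mulr0.
  exfalso; move/eqP: ne; apply; apply/ffunP => i; apply: val_inj.
  by rewrite ffunE /= -h mnmE.
have -> : ps_subst F xt = ev v Q + (ps_subst F xt - ev v Q) by ring.
apply: (R_add hsub); first exact: R_ev.
apply: (R_vge hc) => N hN; rewrite subE subst_SN evE; last exact: hv.
rewrite /SN -sumrB big1 // => e he; rewrite hQ ?subrr //.
by rewrite mdeg_mn; apply: leq_ltn_trans he hN.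
Qed.

Hypothesis npos : (0 < n)%N.
Hypothesis hx1 : xt 1%N = pst k (a 1%N).

Lemma step f : R f -> exists Q f', R f' /\ f = ev v Q + pst k (a 1%N) * f'.
Proof.
move=> Rf; have [Q hQ] := approx (a 1%N + c) Rf.
exists Q, (pst k c * (fun N => (f - ev v Q) (N + (a 1%N + c))%N)); split.
  apply: (R_vge hc); have := vge_mul (@vge_pst k c) (vge0 (fun N => (f - ev v Q) (N + (a 1%N + c))%N)).
  by rewrite addn0.
rewrite mulrA pst_add -vge_shift //; ring.
Qed.

Lemma R_gen f : R f -> ps_gen n xt f.
Proof.
move=> Rf.
have : forall g : ps, exists p : {mpoly k[n]} * ps,
    R g -> R p.2 /\ g = ev v p.1 + pst k (a 1%N) * p.2.
  move=> g; case: (pselect (R g)) => Rg.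
    by have [Q [g' [Rg' e]]] := step Rg; exists (Q, g').
  by exists (0, 0).
move/choice => [st hst].
pose fs := fix fs K := if K is K'.+1 then (st (fs K')).2 else f.
have Rfs : forall K, R (fs K).
  by elim=> [|K IH] //=; have [] := hst _ IH.
pose i0 : 'I_n := Ordinal npos.
have v0 : v i0 = pst k (a 1%N) by [].
pose QQ K := \sum_(i < K) 'X_i0 ^+ i * (st (fs i)).1.
have inv : forall K, f = ev v (QQ K) + pst k (a 1%N) ^+ K * fs K.
  elim=> [|K IH]; first by rewrite /QQ big_ord0 /ev mmap0 expr0 mul1r add0r.
  rewrite /QQ big_ord_recr /= evD evM evXn v0 -/(QQ K).
  have [_ e] := hst _ (Rfs K).
  by rewrite IH {1}e exprS; ring.
have a1 : (0 < a 1%N)%N by apply: a_pos.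
have fN : forall N, f N = ev v (QQ N.+1) N.
  move=> N; rewrite {1}(inv N.+1) addE pst_expr.
  rewrite (_ : (pst k ((a 1%N * N.+1)%N) * fs N.+1) N = 0) ?addr0 //.
  rewrite -[(a 1%N * N.+1)%N]addn0; apply: vge_mul; [exact: vge_pst | exact: vge0 |].
  by rewrite !addn0; exact: leq_pmull.
have stab : forall m K, (mdeg m < K)%N -> (QQ K)@_m = (QQ (mdeg m).+1)@_m.
  move=> m; elim=> // K IH hK; rewrite ltnS leq_eqVlt in hK.
  case/orP: hK => [/eqP -> // | hK].
  rewrite /QQ big_ord_recr /= mcoeffD -/(QQ K) IH // coefXK ?addr0 //.
  by apply: leq_ltn_trans hK; rewrite mdegE (bigD1 i0) //= leq_addr.
exists (fun e => (QQ (\sum_j e j).+1)@_[multinom e i | i < n]).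
apply/funext => N; rewrite subst_SN fN evE; last exact: hv.
rewrite /SN; apply: eq_bigr => e he; congr (_ * _).
have -> : [multinom [ffun j => mn e j] i | i < n] = mn e.
  by apply/mnmP => i; rewrite mnmE ffunE.
rewrite (_ : (\sum_j [ffun j => mn e j] j)%N = mdeg (mn e)); last first.
  by rewrite mdegE; apply: eq_bigr => j _; rewrite ffunE.
by rewrite stab // ltnS mdeg_mn.
Qed.
End Approx.

Theorem mainTheorem10 (k : closedFieldType) (chark : [pchar k] =i pred0)
  (R : ps k -> Prop)
  (hsub : is_k_subalgebra R) (hfin : ps_finite_over R)
  (hbir : ps_birational_over R)
  (c : nat) (hc : is_conductor_degree R c)
  (n : nat) (a : nat -> nat) (ha : is_HK_sequence R n a)
  (x : nat -> ps k) (hx : is_HK_generators R n a x)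
  (alpha : nat -> ps k)
  (hx1 : (1 <= n)%N -> x 1%N = pst k (a 1%N))
  (halpha : forall j, (2 <= j)%N -> (j <= n)%N ->
     x j = psmul (alpha j) (pst k (a j)) /\ alpha j 0%N = 1)
  (i d : nat) (hi : (2 <= i)%N) (hid : (i <= d)%N) (hdn : (d <= n)%N)
  (ho : exists o, has_val (pssub (alpha d) (ps1 k)) o /\ (c <= o + a i)%N) :
  let xt := fun j => if j == d then pst k (a d) else x j in
  (forall f, R f <-> ps_gen n xt f) /\ is_HK_generators R n a xt.
Proof.
move=> xt.
have d2 : (2 <= d)%N := leq_trans hi hid.
have n2 : (2 <= n)%N := leq_trans d2 hdn.
have npos : (0 < n)%N by apply: leq_trans n2.
have amono : forall j j', (1 <= j)%N -> (j <= j')%N -> (j' <= n)%N -> (a j <= a j')%N.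
  move=> j j' h1; elim: j' => [|j' IH] hjj hj'n.
    by move: (leq_trans h1 hjj).
  rewrite leq_eqVlt in hjj; case/orP: hjj => [/eqP -> // | hlt].
  rewrite ltnS in hlt.
  apply: leq_trans (IH hlt (ltnW hj'n)) (ltnW _).
  by apply: ha.1 => //; apply: leq_trans hlt.
have hRd : R (pst k (a d)).
  have [o [[ho0 hoz] hoc]] := ho.
  have [Rxd _] := hx d (leq_trans (isT : (1 <= 2)%N) d2) hdn.
  have [xd _] := halpha d d2 hdn.
  have -> : pst k (a d) = x d - (alpha d - 1) * pst k (a d).
    by rewrite xd psmulE; ring.
  apply: (R_sub hsub Rxd); apply: (R_vge hc).
  apply: (@vge_le k _ (o + a d)%N).
    by apply: leq_trans hoc _; rewrite leq_add2l; apply: amono => //; apply: leq_trans hi.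
  by apply: vge_mul; [exact: hoz | exact: vge_pst].
have hxt : is_HK_generators R n a xt.
  move=> j j1 jn; rewrite /xt; case: eqP => [->|_]; last exact: hx.
  by split; [exact: hRd | exact: has_val_pst].
split => //.
have hx1' : xt 1%N = pst k (a 1%N).
  rewrite /xt; case: eqP => [h|_]; first by move: d2; rewrite -h.
  by apply: hx1; apply: leq_trans n2.
move=> f; split.
  exact: (R_gen hsub hc ha hxt npos hx1').
exact: (gen_R hsub hc ha hxt).
Qed.
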